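(* For every t-relation $r\subseteq\mathcal{D}$, every initial preference formula $F$, and every sequence $X\in\{\mathsf{T},\mathsf{S}\}^*$, we have $\mathrm{Best}_{\succ_{X\mathsf{S}}}(r)\subseteq \mathrm{Best}_{\succ_{X}}(r)$.
   Context: Fix attribute–taxonomy pairs $A_1{:}T_1,\dots,A_d{:}T_d$ with distinct attribute names, where each taxonomy $T_i=(V_i,\le_{V_i})$ is a poset. A t-tuple over a t-schema $S\subseteq\{A_1{:}T_1,\dots,A_d{:}T_d\}$ maps each $A_i$ in $S$ to a value of $V_i$; $\mathcal{D}$ is the set of all t-tuples over all such t-schemas, and a t-relation is a finite set of t-tuples. A preference relation is a binary relation $\succeq$ on $\mathcal{D}$; its strict part is $t_1\succ t_2$ iff $t_1\succeq t_2$ and not $t_2\succeq t_1$. Preferences are given by a formula $F(x,y)=\bigvee_i P_i(x,y)$, a disjunction of statements; each statement $P_i$ is a disjunction of clauses, each clause a satisfiable conjunction of atoms of the forms $x[A_i]\le_{V_i} v$, $x[A_i]\not\le_{V_i} v$, $y[A_i]\le_{V_i} v$, $y[A_i]\not\le_{V_i} v$; the formula induces $t_1\succeq t_2\iff F(t_1,t_2)$. Operator $\mathsf{T}$ maps a formula to one (obtained by adding statements built from composable clause pairs $C_m^b(x)\wedge C_q^w(y)$, where $C^b$ / $C^w$ are the $x$- / $y$-parts of a clause) inducing the transitive closure over $\mathcal{D}$ of the induced relation. Operator $\mathsf{S}$ (specificity-based refinement): repeat rounds; in a round, for each statement $P_i$ let $\mathrm{Impl}(P_i)$ be the set of statements $P_j$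 such that $P_j(t_2,t_1)\Rightarrow P_i(t_1,t_2)$ for all $t_1,t_2\in\mathcal{D}$ but not conversely; simultaneously replace every $P_i$ with nonempty $\mathrm{Impl}(P_i)$ by $P_i(x,y)\wedge\bigwedge_{P_j\in \mathrm{Impl}(P_i)}\neg P_j(y,x)$; stop when no $\mathrm{Impl}$ set is nonempty. After each operator, contradictory clauses and statements subsumed by others are removed. For $X\in\{\mathsf{T},\mathsf{S}\}^*$, $\succeq_X$ (with strict part $\succ_X$) is the relation induced by applying the operators of $X$ in order to the initial formula $F$ ($\succeq_\varepsilon=\succeq$). The Best operator is $\mathrm{Best}_\succ(r)=\{t_1\in r\mid \nexists t_2\in r,\ t_2\succ t_1\}$. *)

(* Defs.v *)
From mathcomp Require Import ssreflect ssrbool eqtype ssrnat fintype.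
From Stdlib Require Import List Relations.

Set Implicit Arguments.
Unset Strict Implicit.

Record taxonomy := Taxonomy {
  tcar : Type;
  tle : tcar -> tcar -> Prop;
  tle_refl : forall v, tle v v;
  tle_antisym : forall v w, tle v w -> tle w v -> v = w;
  tle_trans : forall u v w, tle u v -> tle v w -> tle u w
}.

Section Prefs.
Variable d : nat.
Variable T : 'I_d -> taxonomy.

(* A t-tuple over a t-schema S: for each attribute, Some value if the attribute
   belongs to S, None otherwise.  The type [ttuple] is the set D of all t-tuples
   over all t-schemas. *)
Definition ttuple := forall i : 'I_d, option (tcar (T i)).

(* Atom  z[A_i] <=_{V_i} v  (negated = false) or  z[A_i] not<= v (negated = true),
   where z is x (onx = true) or y (onx = false). *)
Inductive atom := Atom (onx : bool) (i : 'I_d) (negated : bool) (v : tcar (T i)).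

Definition atom_onx (a : atom) : bool := let: Atom b _ _ _ := a in b.

Definition atom_sem (a : atom) (x y : ttuple) : Prop :=
  let: Atom b i n v := a in
  let t := if b then x else y in
  let p := match t i with Some w => tle w v | None => False end in
  if n then ~ p else p.

Definition clause := list atom.
Definition statement := list clause.
Definition formula := list statement.

Definition clause_sem (c : clause) (x y : ttuple) : Prop :=
  List.Forall (fun a => atom_sem a x y) c.
Definition stmt_sem (s : statement) (x y : ttuple) : Prop :=
  List.Exists (fun c => clause_sem c x y) s.
Definition form_sem (f : formula) (x y : ttuple) : Prop :=
  List.Exists (fun s => stmt_sem s x y) f.

Definition xpart (c : clause) : clause := List.filter atom_onx c.
Definition ypart (c : clause) : clause := List.filter (fun a => ~~ atom_onx a) c.

Definition satisfiable (c : clause) : Prop := exists x y, clause_sem c x y.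

Definition wf_formula (f : formula) : Prop :=
  forall s, List.In s f -> forall c, List.In c s -> satisfiable c.

Definition strict (R : ttuple -> ttuple -> Prop) (t1 t2 : ttuple) : Prop :=
  R t1 t2 /\ ~ R t2 t1.

Definition subsumed (s1 s2 : statement) : Prop :=
  forall x y, stmt_sem s1 x y -> stmt_sem s2 x y.

Inductive cleanup_step : formula -> formula -> Prop :=
  | cs_clause (f1 f2 : formula) (s1 s2 : statement) (c : clause) :
      ~ satisfiable c ->
      cleanup_step (f1 ++ (s1 ++ c :: s2) :: f2) (f1 ++ (s1 ++ s2) :: f2)
  | cs_stmt (f1 f2 : formula) (s : statement) :
      (exists s', List.In s' (f1 ++ f2) /\ subsumed s s') ->
      cleanup_step (f1 ++ s :: f2) (f1 ++ f2).

Definition clean (f : formula) : Prop :=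
  (forall s, List.In s f -> forall c, List.In c s -> satisfiable c) /\
  (forall f1 f2 s, f = f1 ++ s :: f2 ->
     ~ exists s', List.In s' (f1 ++ f2) /\ subsumed s s').

Definition cleanup (f g : formula) : Prop :=
  clos_refl_trans formula cleanup_step f g /\ clean g.

Definition opT (f g : formula) : Prop :=
  exists extra : formula,
    (forall s, List.In s extra -> forall c, List.In c s ->
       exists s1 c1 s2 c2, List.In s1 f /\ List.In c1 s1 /\
                           List.In s2 f /\ List.In c2 s2 /\
                           c = xpart c1 ++ ypart c2) /\
    (forall x y, form_sem (f ++ extra) x y <-> clos_trans ttuple (form_sem f) x y) /\
    cleanup (f ++ extra) g.

Definition impl (Pi Pj : statement) : Prop :=
  (forall t1 t2, stmt_sem Pj t2 t1 -> stmt_sem Pi t1 t2) /\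
  ~ (forall t1 t2, stmt_sem Pi t1 t2 -> stmt_sem Pj t2 t1).

Definition has_impl (f : formula) (Pi : statement) : Prop :=
  exists Pj, List.In Pj f /\ impl Pi Pj.

(* One round of S: simultaneously replace every P_i with nonempty Impl(P_i) by
   (a clause-form rendering of) P_i(x,y) /\ /\_{P_j in Impl(P_i)} ~P_j(y,x). *)
Definition S_round (f g : formula) : Prop :=
  length g = length f /\
  forall k, k < length f ->
    let Pi := List.nth k f nil in
    let Qi := List.nth k g nil in
    (has_impl f Pi ->
       forall x y, stmt_sem Qi x y <->
         (stmt_sem Pi x y /\ forall Pj, List.In Pj f -> impl Pi Pj -> ~ stmt_sem Pj y x)) /\
    (~ has_impl f Pi -> Qi = Pi).

Definition S_step (f g : formula) : Prop :=
  exists h, S_round f h /\ cleanup h g.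

Definition no_impl (f : formula) : Prop :=
  forall Pi, List.In Pi f -> ~ has_impl f Pi.

Definition opS (f g : formula) : Prop :=
  clos_refl_trans formula S_step f g /\ no_impl g.

Inductive op := OpT | OpS.

Definition op_rel (o : op) : formula -> formula -> Prop :=
  match o with OpT => opT | OpS => opS end.

Inductive derives (F : formula) : list op -> formula -> Prop :=
  | der_nil : derives F nil F
  | der_snoc (X : list op) (G H : formula) (o : op) :
      derives F X G -> op_rel o G H -> derives F (X ++ o :: nil) H.

Definition Best (R : ttuple -> ttuple -> Prop) (r : list ttuple) (t1 : ttuple) : Prop :=
  List.In t1 r /\ ~ exists t2, List.In t2 r /\ R t2 t1.

End Prefs.

(* Main.v *)
Require Import Defs.
From mathcomp Require Import ssreflect ssrbool eqtype ssrnat fintype.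
From Stdlib Require Import List Relations Classical.

Section Aux.
Variable d : nat.
Variable T : 'I_d -> taxonomy.

Lemma fs_app (f1 f2 : formula T) x y :
  form_sem (f1 ++ f2) x y <-> form_sem f1 x y \/ form_sem f2 x y.
Proof. exact: Exists_app. Qed.

Lemma fs_cons (s : statement T) (f : formula T) x y :
  form_sem (s :: f) x y <-> stmt_sem s x y \/ form_sem f x y.
Proof. split => H; [inversion H; subst; tauto | case: H => H; by constructor]. Qed.

Lemma ss_app (s1 s2 : statement T) x y :
  stmt_sem (s1 ++ s2) x y <-> stmt_sem s1 x y \/ stmt_sem s2 x y.
Proof. exact: Exists_app. Qed.

Lemma ss_cons (c : clause T) (s : statement T) x y :
  stmt_sem (c :: s) x y <-> clause_sem c x y \/ stmt_sem s x y.
Proof. split => H; [inversion H; subst; tauto | case: H => H; by constructor]. Qed.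

Lemma step_sem (f g : formula T) : cleanup_step f g ->
  forall x y, form_sem f x y <-> form_sem g x y.
Proof.
case => [f1 f2 s1 s2 c Hc | f1 f2 s [s' [Hin Hsub]]] x y.
- rewrite !fs_app !fs_cons !ss_app !ss_cons.
  have : ~ clause_sem c x y by move=> Hcs; apply: Hc; exists x, y.
  tauto.
- rewrite !fs_app fs_cons. split; last tauto.
  case=> [?|[Hs|?]]; try tauto.
  have := Hsub _ _ Hs => Hs'.
  have : form_sem (f1 ++ f2) x y by apply/Exists_exists; exists s'.
  rewrite fs_app; tauto.
Qed.

Lemma rt_sem (f g : formula T) : clos_refl_trans _ (@cleanup_step d T) f g ->
  forall x y, form_sem f x y <-> form_sem g x y.
Proof.
elim => [a b H | a | a b c _ IH1 _ IH2] x y.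
- exact: step_sem.
- tauto.
- rewrite IH1 IH2; tauto.
Qed.

Lemma round_sub (f g : formula T) : S_round f g ->
  forall x y, form_sem g x y -> form_sem f x y.
Proof.
move=> [Hlen Hr] x y /Exists_exists [Q [HQ HQs]].
have [k [Hk Hnth]] := In_nth _ _ nil HQ.
have Hk' : k < length f by apply/ltP; rewrite -Hlen.
have [H1 H2] := Hr k Hk'.
apply/Exists_exists; exists (nth k f nil); split.
  apply: nth_In; by rewrite -Hlen.
case: (Classical_Prop.classic (has_impl f (nth k f nil))) => Hh.
- rewrite Hnth in H1. by case: (proj1 (H1 Hh x y) HQs).
- by rewrite -(H2 Hh) Hnth.
Qed.

Lemma round_strict (f g : formula T) : S_round f g ->
  forall x y, strict (form_sem f) x y -> strict (form_sem g) x y.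
Proof.
move=> Hr x y [Hxy Hyx]; split; last by move=> Hg; apply: Hyx; exact: (@round_sub f g Hr y x Hg).
case: Hr => [Hlen Hr].
move: Hxy => /Exists_exists [P [HP HPs]].
have [k [Hk Hnth]] := In_nth _ _ nil HP.
have Hk' : k < length f by apply/ltP.
have [H1 H2] := Hr k Hk'.
apply/Exists_exists; exists (nth k g nil); split.
  apply: nth_In; by rewrite Hlen.
case: (Classical_Prop.classic (has_impl f (nth k f nil))) => Hh.
- apply/(H1 Hh x y); rewrite Hnth; split => // Pj HPj _ HPjs.
  apply: Hyx; apply/Exists_exists; by exists Pj.
- by rewrite (H2 Hh) Hnth.
Qed.

Lemma step_strict (f g : formula T) : S_step f g ->
  forall x y, strict (form_sem f) x y -> strict (form_sem g) x y.
Proof.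
move=> [h [Hr [Hc _]]] x y Hs.
have [A B] := @round_strict f h Hr x y Hs.
split; [by apply/(@rt_sem h g Hc) | by rewrite -(@rt_sem h g Hc)].
Qed.

Lemma rtS_strict (f g : formula T) : clos_refl_trans _ (@S_step d T) f g ->
  forall x y, strict (form_sem f) x y -> strict (form_sem g) x y.
Proof.
elim => [a b H | a | a b c _ IH1 _ IH2] x y Hs.
- exact: (@step_strict a b H).
- exact: Hs.
- by apply: IH2; apply: IH1.
Qed.

End Aux.

Theorem mainTheorem1 (d : nat) (T : 'I_d -> taxonomy) (F : formula T)
  (X : list op) (G H : formula T) (r : list (ttuple T)) :
  wf_formula F ->
  derives F X G ->
  opS G H ->
  forall t, Best (strict (form_sem H)) r t -> Best (strict (form_sem G)) r t.
Proof.
move=> _ _ [HS _] t [Hin Hn]; split => // [[t2 [H2 Hs]]].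
apply: Hn; exists t2; split => //; exact: (@rtS_strict d T G H HS t2 t Hs).
Qed.
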